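(* Let $N\ge 1$ be an integer. Let $\phi_0,\phi_1,\phi_2,\dots$ be the orthonormal Hermite polynomials with respect to the weight $M(v)=\frac{1}{\sqrt{2\pi}}e^{-v^2/2}$, i.e. $\int_{\mathbb{R}}\phi_i(v)\phi_j(v)M(v)\,dv=\delta_{ij}$, with $\phi_0=1$, $\phi_1(v)=v$ and $v\phi_k(v)=\sqrt{k}\,\phi_{k-1}(v)+\sqrt{k+1}\,\phi_{k+1}(v)$. Let $0<z_1<\dots<z_N$ be the positive roots of $\phi_{2N}$, and set $v_j=-z_j$, $v_{N+j}=z_j$ for $j=1,\dots,N$. Let $V$ be the $2N\times 2N$ matrix with entries $V_{ij}=\phi_{i}(v_{j+1})$ for $i,j=0,\dots,2N-1$. Let $A$ be the symmetric tridiagonal $2N\times 2N$ matrix with zero diagonal and off-diagonal entries $A_{p-1,p}=A_{p,p-1}=\sqrt{p}$ for $p=1,\dots,2N-1$ (indices from $0$). Define the $N\times 2N$ matrix $B_1=\begin{pmatrix} I_N & -I_N\end{pmatrix}V^T$. Then, for every number of edges $n$, $y^TAy=0$ for every $y\in\ker(B_1)$.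
   Context: $I_N$ denotes the $N\times N$ identity matrix. The matrix $B_1$ encodes the boundary condition $B_1U(0,t)=0$ satisfied by the sum of the moment vectors over all $n$ edges at a network junction with the symmetric coupling condition; it does not depend on $n$. *)

(* Defs.v *)
From HB Require Import structures.
From mathcomp Require Import all_boot all_order all_algebra.
From mathcomp Require Import reals.
Set Implicit Arguments. Unset Strict Implicit. Unset Printing Implicit Defensive.
Import Order.TTheory GRing.Theory Num.Theory.
Local Open Scope ring_scope.

Section Hermite.
Variable R : realType.

(* herm_pair k = (phi_k, phi_(k+1)), defined by phi_0 = 1, phi_1 = X and the
   three-term recurrence  v phi_k = sqrt k phi_(k-1) + sqrt (k+1) phi_(k+1),
   i.e.  phi_(k+2) = (X phi_(k+1) - sqrt (k+1) phi_k) / sqrt (k+2). *)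
Fixpoint herm_pair (k : nat) : {poly R} * {poly R} :=
  match k with
  | 0%N => (1, 'X)
  | k'.+1 =>
      let: (a, b) := herm_pair k' in
      (b, (Num.sqrt (k'.+2)%:R)^-1 *: ('X * b - Num.sqrt (k'.+1)%:R *: a))
  end.

Definition hermite (k : nat) : {poly R} := (herm_pair k).1.

Definition nodes (N : nat) (z : 'I_N -> R) : 'I_(N + N) -> R :=
  fun k => match split k with inl j => - z j | inr j => z j end.

Definition Vmat (N : nat) (z : 'I_N -> R) : 'M[R]_(N + N) :=
  \matrix_(i, j) (hermite i).[nodes z j].

Definition Amat (N : nat) : 'M[R]_(N + N) :=
  \matrix_(i, j)
    (if j == i.+1 :> nat then Num.sqrt (j%:R)
     else if i == j.+1 :> nat then Num.sqrt (i%:R) else 0).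

Definition B1 (N : nat) (z : 'I_N -> R) : 'M[R]_(N, N + N) :=
  row_mx (1%:M) (- 1%:M) *m (Vmat z)^T.

End Hermite.

(* Main.v *)
Require Import Defs.
From HB Require Import structures.
From mathcomp Require Import all_boot all_order all_algebra.
From mathcomp Require Import reals.
From mathcomp Require Import ring lra zify.
Import Order.TTheory GRing.Theory Num.Theory.
Local Open Scope ring_scope.

Section P.
Variable R : realType.
Local Notation h := (hermite R).

Lemma herm_pairS k : herm_pair R k.+1 = ((herm_pair R k).2,
  (Num.sqrt (k.+2)%:R)^-1 *: ('X * (herm_pair R k).2 - Num.sqrt (k.+1)%:R *: (herm_pair R k).1)).
Proof. by rewrite /=; case: (herm_pair R k). Qed.

Lemma hermite0 : h 0 = 1. Proof. by []. Qed.
Lemma hermite1 : h 1 = 'X. Proof. by []. Qed.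
Lemma hermiteS k : (herm_pair R k).2 = h k.+1.
Proof. by rewrite /hermite herm_pairS. Qed.
Lemma hermiteSS k : h k.+2 = (Num.sqrt (k.+2)%:R)^-1 *: ('X * h k.+1 - Num.sqrt (k.+1)%:R *: h k).
Proof. by rewrite -[h k.+2]hermiteS herm_pairS -hermiteS. Qed.

Lemma sqrtS_neq0 k : Num.sqrt (k.+1)%:R != 0 :> R.
Proof. by rewrite gt_eqF // sqrtr_gt0 ltr0Sn. Qed.

Lemma hrec k x : x * (h k.+1).[x] =
  Num.sqrt (k.+1)%:R * (h k).[x] + Num.sqrt (k.+2)%:R * (h k.+2).[x].
Proof.
rewrite hermiteSS hornerZ mulrA mulfV ?sqrtS_neq0 // mul1r hornerD hornerN hornerZ hornerM hornerX; ring.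
Qed.

Lemma hpar k x : (h k).[-x] = (-1)^+k * (h k).[x].
Proof.
suff : (h k).[-x] = (-1)^+k * (h k).[x] /\ (h k.+1).[-x] = (-1)^+k.+1 * (h k.+1).[x] by case.
elim: k => [|k [IH1 IH2]].
  by rewrite hermite0 hermite1 !hornerE expr1 mulN1r; split.
split; first exact IH2.
rewrite hermiteSS !(hornerZ, hornerD, hornerN, hornerM, hornerX) IH1 IH2 !exprS; ring.
Qed.

Lemma sum_ind (n m : nat) (g : nat -> R) :
  \sum_(k < n) (if (k == m :> nat) then g k else 0) = if (m < n)%N then g m else 0.
Proof.
elim: n => [|n IH]; first by rewrite big_ord0.
rewrite big_ord_recr /= IH.
case: (ltngtP m n) => [H|H|<-].
- have -> : (m < n.+1)%N by lia.
  by rewrite addr0.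
- have -> : (m < n.+1)%N = false by lia.
  by rewrite addr0.
- by rewrite ltnSn add0r.
Qed.

Lemma AmatE N (i k : 'I_(N+N)) : Amat R N i k =
  (if (k == i.+1 :> nat) then Num.sqrt (k%:R) else 0) +
  (if (i == k.+1 :> nat) then Num.sqrt (i%:R) else 0).
Proof.
rewrite mxE; case: eqP => e1; case: eqP => e2; rewrite ?addr0 ?add0r //; lia.
Qed.

Lemma Amat_sym N : (Amat R N)^T = Amat R N.
Proof. by apply/matrixP => i j; rewrite mxE !AmatE addrC. Qed.

Lemma ifmul (b : bool) (a c : R) : (if b then a else 0) * c = if b then a * c else 0.
Proof. by case: b; rewrite ?mul0r. Qed.

Lemma Amat_row N (i : 'I_(N+N)) (x : R) : root (h (N+N)) x ->
  \sum_k Amat R N i k * (h k).[x] = x * (h i).[x].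
Proof.
move=> /eqP hx.
under eq_bigr => k _ do rewrite AmatE mulrDl.
rewrite big_split /=.
under eq_bigr => k _ do rewrite ifmul.
rewrite (sum_ind _ _ (fun k => Num.sqrt k%:R * (h k).[x])).
case: i => [[|i] Hi] /=.
  rewrite big1; last by move=> k _; rewrite /= mul0r.
  rewrite addr0 hermite0 hermite1 !hornerE sqrtr1 mul1r.
  case: ifP => // /negbT; rewrite -leqNgt => H; lia.
under eq_bigr => k _ do rewrite ifmul eqSS eq_sym.
rewrite (sum_ind _ _ (fun k => Num.sqrt i.+1%:R * (h k).[x])) (ltn_trans (ltnSn i) Hi) hrec addrC.
case: ifP => // /negbT; rewrite -leqNgt => H.
have -> : i.+2 = (N + N)%N by lia.
by rewrite hx mulr0.
Qed.
End P.
Lemma nodes_l (R : realType) N (z : 'I_N -> R) j : nodes z (lshift N j) = - z j.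
Proof. by rewrite /nodes (unsplitK (inl j)). Qed.
Lemma nodes_r (R : realType) N (z : 'I_N -> R) j : nodes z (rshift N j) = z j.
Proof. by rewrite /nodes (unsplitK (inr j)). Qed.

Theorem lemma4p2 (R : realType) (N : nat) (hN : (1 <= N)%N)
    (z : 'I_N -> R)
    (z_pos : forall j, 0 < z j)
    (z_incr : forall i j : 'I_N, (i < j)%N -> z i < z j)
    (z_root : forall j, root (hermite R (N + N)) (z j))
    (z_all : forall x : R, 0 < x -> root (hermite R (N + N)) x ->
                exists j, z j = x)
    (n : nat) :
  forall y : 'cV[R]_(N + N), B1 z *m y = 0 ->
    y^T *m Amat R N *m y = 0.
Proof.
move=> y By.
set V := Vmat z; set d := nodes z; set A := Amat R N.
have d_root : forall j, root (hermite R (N+N)) (d j).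
  move=> j; rewrite /d /nodes; case: split => a; last exact: z_root.
  by apply/eqP; rewrite hpar (eqP (z_root a)) mulr0.
have z_inj : forall a b, z a = z b -> a = b.
  move=> a b e; case: (ltngtP a b) => H.
  - by have := z_incr _ _ H; rewrite e ltxx.
  - by have := z_incr _ _ H; rewrite e ltxx.
  - exact: val_inj.
have d_inj : forall i j, d i = d j -> i = j.
  move=> i j; rewrite -(splitK i) -(splitK j).
  case: (split i) => a; case: (split j) => b;
    rewrite /= /d ?nodes_l ?nodes_r => e.
  - by rewrite (z_inj _ _ (oppr_inj e)).
  - by exfalso; move: (z_pos a) (z_pos b); lra.
  - by exfalso; move: (z_pos a) (z_pos b); lra.
  - by rewrite (z_inj _ _ e).
have AV : forall i j, (A *m V) i j = V i j * d j.
  move=> i j; rewrite mxE.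
  under eq_bigr => k _ do rewrite [V k j]mxE.
  by rewrite Amat_row // mxE mulrC.
set C := V^T *m V.
have MC : forall i j, (V^T *m A *m V) i j = C i j * d j.
  move=> i j; rewrite -mulmxA !mxE mulr_suml; apply: eq_bigr => k _.
  by rewrite AV mulrA.
have Msym : (V^T *m A *m V)^T = V^T *m A *m V.
  by rewrite !trmx_mul trmxK Amat_sym mulmxA.
have Csym : forall i j, C i j = C j i.
  by move=> i j; rewrite !mxE; apply: eq_bigr => k _; rewrite !mxE mulrC.
have Coff : forall i j, i != j -> C i j = 0.
  move=> i j ij.
  have e := congr1 (fun M : 'M[R]_(N+N) => M i j) Msym.
  rewrite /= mxE !MC (Csym j i) in e.
  have : C i j * (d j - d i) = 0 by rewrite mulrBr -e subrr.
  move/eqP; rewrite mulf_eq0 subr_eq0 => /orP [/eqP //|/eqP dij].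
  by move: ij; rewrite (d_inj _ _ dij) eqxx.
have lt0 : (0 < N + N)%N by lia.
pose k0 := Ordinal lt0.
have c_pos : forall j, 0 < C j j.
  move=> j; rewrite mxE (bigD1 k0) //= !mxE.
  have S0 : 0 <= \sum_(k < N + N | k != k0) V^T j k * V k j.
    by apply: sumr_ge0 => k _; rewrite !mxE -expr2 sqr_ge0.
  rewrite hermite0 !hornerE. lra.
have Cdiag : C = diag_mx (\row_j C j j).
  apply/matrixP => i j; rewrite [RHS]mxE [X in X *+ _]mxE.
  case: eqP => [->|/eqP ij]; first by rewrite mulr1n.
  by rewrite mulr0n Coff.
have Vunit : V \in unitmx.
  rewrite unitmxE unitfE.
  have : \det C != 0.
    rewrite Cdiag det_diag; apply/prodf_neq0 => j _; rewrite mxE.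
    by rewrite gt_eqF.
  by rewrite /C det_mulmx det_tr mulf_eq0 negb_or => /andP[].
set x := invmx V *m y.
have hy : y = V *m x by rewrite /x mulKVmx.
clearbody x.
have MD : V^T *m A *m V = diag_mx (\row_j (C j j * d j)).
  apply/matrixP => i j; rewrite MC [RHS]mxE [X in X *+ _]mxE.
  case: eqP => [->|/eqP ij]; first by rewrite mulr1n.
  by rewrite mulr0n Coff // mul0r.
have wE : forall i, (V^T *m y) i 0 = C i i * x i 0.
  by move=> i; rewrite hy mulmxA -/C {1}Cdiag mul_diag_mx !mxE.
have Bw0 : forall w : 'cV[R]_(N+N), row_mx 1%:M (- 1%:M) *m w = 0 ->
    forall j : 'I_N, w (lshift N j) 0 = w (rshift N j) 0.
  move=> w; rewrite -{1}[w]vsubmxK mul_row_col mul1mx mulNmx mul1mx.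
  move=> /eqP; rewrite subr_eq0 => /eqP e j.
  have := congr1 (fun M : 'M[R]_(N,1) => M j 0) e.
  by rewrite !mxE.
have Bw := Bw0 _ (etrans (mulmxA _ _ _) By).
have cLR : forall j : 'I_N, C (lshift N j) (lshift N j) = C (rshift N j) (rshift N j).
  move=> j; rewrite !mxE; apply: eq_bigr => k _; rewrite !mxE nodes_l nodes_r hpar.
  by rewrite mulrACA -exprD addnn -mul2n exprM sqrrN expr1n expr1n mul1r.
have xLR : forall j : 'I_N, x (lshift N j) 0 = x (rshift N j) 0.
  move=> j; have := Bw j; rewrite !wE -cLR => e.
  exact: (mulfI (negbT (gt_eqF (c_pos _))) e).
clearbody C.
have -> : y^T *m A *m y = x^T *m (V^T *m A *m V) *m x by rewrite hy trmx_mul !mulmxA.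
rewrite MD mul_mx_diag; apply/matrixP => i j; rewrite !ord1 !mxE.
rewrite big_split_ord /= -big_split /=; apply: big1 => k _.
rewrite !mxE xLR cLR /d nodes_l nodes_r. ring.
Qed.
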